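(* Consider the discrete-time plant $$z_{k+1} = A_{ss} z_k + B_{1s} d_k + B_{2s} u_k,\quad e_k = C_{1s} z_k + D_{11} d_k + D_{12} u_k,\quad \hat y_k = z_k,\quad z_0\in\mathbb{I},$$ with $z_k\in\mathbb{R}^N$, $N=n+\bar N$, $u_k\in\mathbb{R}^{n_u}$, and $\mathbb{I} = \{(\bar p,\bar q) : \bar p\in\varepsilon(P),\ \bar q\in\varepsilon(Q)\}$, where $P\in\mathbb{S}^n$, $Q\in\mathbb{S}^{\bar N}$ are positive definite and $\varepsilon(P)=\{y: y^TPy\le 1\}$ (this is the lifted LPV model with all scheduling-parameter input matrices equal to zero, i.e., an LTI model). Then a static state-feedback LTI controller $u_k = D^c \hat y_k$ such that the closed loop is stable and $$\sup \{\lVert e \rVert_{\ell_2} \mid \lVert d \rVert_{\ell_2} \leq 1,\ z_0 \in \mathbb{I} \}< \gamma$$ exists if there exist a positive definite matrix $R \in \mathbb{S}^{N}$, a matrix $S \in \mathbb{R}^{n_u \times N}$, and positive scalars $b$, $f_{11}$, $f_{12}$, $f_2$ such that $$\begin{bmatrix} - R & A_{ss} R + B_{2s} S & B_{1s} & 0 \\ \ast & - R & 0 & (C_{1s} R + D_{12} S)^T \\ \ast & \ast & -f_2 I & D_{11}^T \\ \ast & \ast & \ast & -b I \end{bmatrix} \prec 0, \quad b + f_{11} + f_{12} + f_2 < 2\gamma, \quad \begin{bmatrix} F_1 & \Gamma^T \\ \Gamma & R \end{bmatrix} \succ 0,$$ where $\Gamma = \mathrm{diag}(P^{-1/2}, Q^{-1/2})$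 and $F_1 = \mathrm{diag}(f_{11} I_n, f_{12}I_{\bar{N}})$. If this problem is feasible, the controller is $u = SR^{-1}\hat y$, i.e., for the underlying nonlinear system with lifting map $\Phi$ and no measurement noise, $u = SR^{-1}\Phi(x)$.
   Context: $\ast$ denotes entries inferred by symmetry; $\mathbb{S}^m$ denotes real symmetric $m\times m$ matrices. *)

(* Defs.v *)
From HB Require Import structures.
From mathcomp Require Import all_boot all_order all_algebra.
From mathcomp Require Import all_classical all_reals all_analysis.
Set Implicit Arguments. Unset Strict Implicit. Unset Printing Implicit Defensive.
Import Order.TTheory GRing.Theory Num.Theory.
Local Open Scope classical_set_scope.
Local Open Scope ring_scope.

Section Defs.
Variable R : realType.

Definition posdef m (M : 'M[R]_m) : Prop :=
  M^T = M /\ forall x : 'cV[R]_m, x != 0 -> 0 < (x^T *m M *m x) 0 0.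

Definition negdef m (M : 'M[R]_m) : Prop := posdef (- M).

Definition is_inv_sqrt m (M X : 'M[R]_m) : Prop :=
  posdef X /\ X *m X = invmx M.

Definition ellipsoid m (P : 'M[R]_m) : set 'cV[R]_m :=
  [set y | (y^T *m P *m y) 0 0 <= 1].

Definition init_set n Nb (P : 'M[R]_n) (Q : 'M[R]_Nb) : set 'cV[R]_(n + Nb) :=
  [set z | exists p q, ellipsoid P p /\ ellipsoid Q q /\ z = col_mx p q].

Definition sqnorm m (v : 'cV[R]_m) : R := \sum_i (v i 0) ^+ 2.

Definition l2sq m (x : nat -> 'cV[R]_m) : \bar R :=
  (\sum_(0 <= k <oo) (sqnorm (x k))%:E)%E.

Definition l2norm m (x : nat -> 'cV[R]_m) : \bar R :=
  match l2sq x with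
  | EFin r => (Num.sqrt r)%:E
  | _ => +oo%E
  end.

Fixpoint cl_state N nd nu (A : 'M[R]_N) (B1 : 'M[R]_(N, nd)) (B2 : 'M[R]_(N, nu))
  (Dc : 'M[R]_(nu, N)) (d : nat -> 'cV[R]_nd) (z0 : 'cV[R]_N) (k : nat)
  : 'cV[R]_N :=
  match k with
  | 0 => z0
  | k'.+1 => let z := cl_state A B1 B2 Dc d z0 k' in
             A *m z + B1 *m d k' + B2 *m (Dc *m z)
  end.

Definition cl_output N nd nu ne (A : 'M[R]_N) (B1 : 'M[R]_(N, nd))
  (B2 : 'M[R]_(N, nu)) (C1 : 'M[R]_(ne, N)) (D11 : 'M[R]_(ne, nd))
  (D12 : 'M[R]_(ne, nu)) (Dc : 'M[R]_(nu, N)) (d : nat -> 'cV[R]_nd)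
  (z0 : 'cV[R]_N) (k : nat) : 'cV[R]_ne :=
  let z := cl_state A B1 B2 Dc d z0 k in
  C1 *m z + D11 *m d k + D12 *m (Dc *m z).

Definition schur_stable N (Acl : 'M[R]_N) : Prop :=
  forall (z0 : 'cV[R]_N) (i : 'I_N),
    (fun k : nat => ((Acl ^+ k) *m z0) i 0) @ \oo --> 0.

Definition worst_case nd nu ne n Nb (P : 'M[R]_n) (Q : 'M[R]_Nb)
  (A : 'M[R]_(n + Nb)) (B1 : 'M[R]_(n + Nb, nd))
  (B2 : 'M[R]_(n + Nb, nu)) (C1 : 'M[R]_(ne, n + Nb)) (D11 : 'M[R]_(ne, nd))
  (D12 : 'M[R]_(ne, nu)) (Dc : 'M[R]_(nu, n + Nb)) : \bar R :=
  ereal_sup [set x | exists (d : nat -> 'cV[R]_nd) z0,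
     (l2norm d <= 1%:E)%E /\ init_set P Q z0 /\
     x = l2norm (cl_output A B1 B2 C1 D11 D12 Dc d z0)].

End Defs.

(* Main.v *)
Require Import Defs.
From HB Require Import structures.
From mathcomp Require Import all_boot all_order all_algebra.
From mathcomp Require Import all_classical all_reals all_analysis.
From mathcomp Require Import ring lra.
Import Order.TTheory GRing.Theory Num.Theory.
Import numFieldNormedType.Exports.
Set Implicit Arguments. Unset Strict Implicit. Unset Printing Implicit Defensive.
Local Open Scope ring_scope.



Section Alg.
Variable R : realType.

Definition dot m (u w : 'cV[R]_m) : R := (u^T *m w) 0 0.

Lemma dotE m (u w : 'cV[R]_m) : dot u w = \sum_(i < m) (u i 0 * w i 0)%R.
Proof. by rewrite /dot !mxE; apply: eq_bigr => i _; rewrite mxE. Qed.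

Lemma dotC m (u w : 'cV[R]_m) : dot u w = dot w u.
Proof. by rewrite !dotE; apply: eq_bigr => i _; rewrite mulrC. Qed.

Lemma dotDl m (u v w : 'cV[R]_m) : dot (u + v) w = dot u w + dot v w.
Proof. by rewrite !dotE -big_split; apply: eq_bigr => i _; rewrite mxE mulrDl. Qed.

Lemma dotDr m (u v w : 'cV[R]_m) : dot w (u + v) = dot w u + dot w v.
Proof. by rewrite dotC dotDl !(dotC w). Qed.

Lemma dotZl m a (u w : 'cV[R]_m) : dot (a *: u) w = a * dot u w.
Proof. by rewrite !dotE mulr_sumr; apply: eq_bigr => i _; rewrite mxE mulrA. Qed.

Lemma dotZr m a (u w : 'cV[R]_m) : dot w (a *: u) = a * dot w u.
Proof. by rewrite dotC dotZl dotC. Qed.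

Lemma dotNl m (u w : 'cV[R]_m) : dot (- u) w = - dot u w.
Proof. by rewrite -scaleN1r dotZl mulN1r. Qed.

Lemma dotNr m (u w : 'cV[R]_m) : dot w (- u) = - dot w u.
Proof. by rewrite dotC dotNl dotC. Qed.

Lemma dot0l m (w : 'cV[R]_m) : dot 0 w = 0.
Proof. by rewrite dotE big1 // => i _; rewrite mxE mul0r. Qed.

Lemma dot0r m (w : 'cV[R]_m) : dot w 0 = 0.
Proof. by rewrite dotC dot0l. Qed.

Lemma dot_tr m p (M : 'M[R]_(m, p)) (u : 'cV[R]_p) (w : 'cV[R]_m) :
  dot u (M^T *m w) = dot (M *m u) w.
Proof.
by rewrite /dot mulmxA -trmx_mul.
Qed.

Lemma dot_col m1 m2 (u1 w1 : 'cV[R]_m1) (u2 w2 : 'cV[R]_m2) :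
  dot (col_mx u1 u2) (col_mx w1 w2) = dot u1 w1 + dot u2 w2.
Proof. by rewrite /dot tr_col_mx mul_row_col mxE. Qed.

Lemma dot_block m1 m2 p1 p2 (A : 'M[R]_(m1, p1)) (B : 'M[R]_(m1, p2))
  (C : 'M[R]_(m2, p1)) (D : 'M[R]_(m2, p2)) u1 u2 w1 w2 :
  dot (col_mx u1 u2) (block_mx A B C D *m col_mx w1 w2) =
  dot u1 (A *m w1) + dot u1 (B *m w2) + dot u2 (C *m w1) + dot u2 (D *m w2).
Proof. by rewrite mul_block_col dot_col !dotDr !addrA. Qed.

Lemma dot_ge0 m (u : 'cV[R]_m) : 0 <= dot u u.
Proof. by rewrite dotE; apply: sumr_ge0 => i _; rewrite -expr2 sqr_ge0. Qed.

Lemma sqnorm_dot m (u : 'cV[R]_m) : sqnorm u = dot u u.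
Proof. by rewrite dotE; apply: eq_bigr => i _; rewrite expr2. Qed.

Lemma qfE m (x : 'cV[R]_m) (M : 'M[R]_m) : (x^T *m M *m x) 0 0 = dot x (M *m x).
Proof. by rewrite /dot mulmxA. Qed.

Lemma posdef_ge0 m (M : 'M[R]_m) x : posdef M -> 0 <= dot x (M *m x).
Proof.
move=> [_ H]; have [->|nz] := eqVneq x 0; first by rewrite dot0l.
by rewrite -qfE; apply/ltW/H.
Qed.

Lemma posdef_unit m (M : 'M[R]_m) : posdef M -> M \in unitmx.
Proof.
move=> [HT H]; rewrite -row_free_unit; apply: inj_row_free => v Hv.
apply/eqP; apply/negPn/negP => nz.
have nz' : v^T != 0 by apply: contra nz => /eqP h; rewrite -[v]trmxK h trmx0.
have := H _ nz'; rewrite qfE.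
have -> : M *m v^T = 0 by rewrite -HT -trmx_mul Hv trmx0.
by rewrite dot0r ltxx.
Qed.

Lemma negdef_le0 m (M : 'M[R]_m) x : negdef M -> dot x (M *m x) <= 0.
Proof.
move=> H; have := posdef_ge0 x H; rewrite mulNmx dotNr; lra.
Qed.

Lemma negdef_lt0 m (M : 'M[R]_m) x : negdef M -> x != 0 -> dot x (M *m x) < 0.
Proof.
move=> [_ H] /H; rewrite qfE mulNmx dotNr; lra.
Qed.

Lemma lmi_expand N nd ne (RR AR : 'M[R]_N) (B1 : 'M[R]_(N,nd)) (CR : 'M[R]_(ne,N))
  (D11 : 'M[R]_(ne,nd)) (f2 b : R) v1 v2 v3 v4 :
  dot (col_mx (col_mx v1 v2) (col_mx v3 v4))
   (block_mx (block_mx (- RR) AR AR^T (- RR))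
             (block_mx B1 (0 : 'M[R]_(N, ne)) (0 : 'M[R]_(N, nd)) CR^T)
             (block_mx B1 (0 : 'M[R]_(N, ne)) (0 : 'M[R]_(N, nd)) CR^T)^T
             (block_mx (- (f2%:M : 'M[R]_nd)) D11^T D11 (- (b%:M : 'M[R]_ne)))
    *m col_mx (col_mx v1 v2) (col_mx v3 v4)) =
  - dot v1 (RR *m v1) + 2 * dot v1 (AR *m v2) + 2 * dot v1 (B1 *m v3)
  - dot v2 (RR *m v2) + 2 * dot v4 (CR *m v2) - f2 * dot v3 v3
  + 2 * dot v4 (D11 *m v3) - b * dot v4 v4.
Proof.
rewrite !tr_block_mx !dot_block.
rewrite !trmx0 trmxK !mul0mx !dot0r !mulNmx !dotNr !mul_scalar_mx !dotZr.
rewrite !dot_tr [dot (AR *m v2) v1]dotC [dot (B1 *m v3) v1]dotC.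
rewrite [dot (CR *m v2) v4]dotC [dot (D11 *m v3) v4]dotC.
ring.
Qed.

End Alg.



Section Sys.
Variable R : realType.
Variables (N nu nd ne : nat) (Ass : 'M[R]_N) (B1s : 'M[R]_(N, nd))
  (B2s : 'M[R]_(N, nu)) (C1s : 'M[R]_(ne, N)) (D11 : 'M[R]_(ne, nd))
  (D12 : 'M[R]_(ne, nu)) (RR : 'M[R]_N) (S : 'M[R]_(nu, N)) (b f2 : R).
Hypothesis RRu : RR \in unitmx.
Hypothesis bpos : 0 < b.

Definition LMI :=
  block_mx
            (block_mx (- RR) (Ass *m RR + B2s *m S)
                      ((Ass *m RR + B2s *m S)^T) (- RR))
            (block_mx B1s (0 : 'M[R]_(N, ne))
                      (0 : 'M[R]_(N, nd)) ((C1s *m RR + D12 *m S)^T))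
            (block_mx B1s (0 : 'M[R]_(N, ne))
                      (0 : 'M[R]_(N, nd)) ((C1s *m RR + D12 *m S)^T))^T
            (block_mx (- (f2%:M : 'M[R]_(nd))) (D11^T) D11 (- (b%:M : 'M[R]_(ne)))).

Definition Vf (z : 'cV[R]_N) := dot (invmx RR *m z) z.

Lemma RRX (z : 'cV[R]_N) : RR *m (invmx RR *m z) = z.
Proof. by rewrite mulmxA mulmxV // mul1mx. Qed.

Lemma ARX (z : 'cV[R]_N) : (Ass *m RR + B2s *m S) *m (invmx RR *m z)
   = Ass *m z + B2s *m ((S *m invmx RR) *m z).
Proof. by rewrite mulmxDl -!mulmxA RRX. Qed.

Lemma CRX (z : 'cV[R]_N) : (C1s *m RR + D12 *m S) *m (invmx RR *m z)
   = C1s *m z + D12 *m ((S *m invmx RR) *m z).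
Proof. by rewrite mulmxDl -!mulmxA RRX. Qed.

Definition vecv (z : 'cV[R]_N) (d : 'cV[R]_nd) :=
  let Dc := S *m invmx RR in
  let zp := Ass *m z + B1s *m d + B2s *m (Dc *m z) in
  let e := C1s *m z + D11 *m d + D12 *m (Dc *m z) in
  col_mx (col_mx (invmx RR *m zp) (invmx RR *m z)) (col_mx d (b^-1 *: e)).

Lemma step_eq (z : 'cV[R]_N) (d : 'cV[R]_nd) :
  let Dc := S *m invmx RR in
  let zp := Ass *m z + B1s *m d + B2s *m (Dc *m z) in
  let e := C1s *m z + D11 *m d + D12 *m (Dc *m z) in
  dot (vecv z d) (LMI *m vecv z d) = Vf zp - Vf z + b^-1 * dot e e - f2 * dot d d.
Proof.
move=> Dc zp e; rewrite /vecv /LMI lmi_expand !RRX ARX CRX -/Dc -/zp -/e.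
rewrite !dotZl !dotZr.
have h1 : dot (invmx RR *m zp) (Ass *m z + B2s *m (Dc *m z)) +
          dot (invmx RR *m zp) (B1s *m d) = Vf zp.
  by rewrite -dotDr /Vf /zp addrAC.
have h2 : dot e (C1s *m z + D12 *m (Dc *m z)) + dot e (D11 *m d) = dot e e.
  by rewrite -dotDr /e addrAC.
rewrite /Vf in h1 *.
have bn : b != 0 by rewrite gt_eqF.
have -> : dot (invmx RR *m zp) (Ass *m z + B2s *m (Dc *m z)) =
   dot (invmx RR *m zp) zp - dot (invmx RR *m zp) (B1s *m d) by rewrite -h1; ring.
have -> : dot e (C1s *m z + D12 *m (Dc *m z)) = dot e e - dot e (D11 *m d) by rewrite -h2; ring.
by field.
Qed.

Lemma vecv_neq0 (z : 'cV[R]_N) (d : 'cV[R]_nd) : z != 0 -> vecv z d != 0.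
Proof.
move=> nz; apply: contra nz; rewrite /vecv !col_mx_eq0 => /andP[/andP[_ /eqP h] _].
by rewrite -(RRX z) h mulmx0.
Qed.

Lemma Vf_ge0 (z : 'cV[R]_N) : posdef RR -> 0 <= Vf z.
Proof.
move=> pd; rewrite /Vf -{2}(RRX z); exact: posdef_ge0.
Qed.


Hypothesis RRpd : posdef RR.
Hypothesis Hlmi : negdef LMI.

Lemma step_le (z : 'cV[R]_N) (d : 'cV[R]_nd) :
  Vf (Ass *m z + B1s *m d + B2s *m ((S *m invmx RR) *m z)) - Vf z
  + b^-1 * dot (C1s *m z + D11 *m d + D12 *m ((S *m invmx RR) *m z))
               (C1s *m z + D11 *m d + D12 *m ((S *m invmx RR) *m z))
  - f2 * dot d d <= 0.
Proof. by rewrite -step_eq; apply: negdef_le0. Qed.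

Definition Acl := Ass + B2s *m (S *m invmx RR).
Definition Gm := invmx RR - Acl^T *m invmx RR *m Acl.

Lemma Gm_dot (x : 'cV[R]_N) : dot x (Gm *m x) = Vf x - Vf (Acl *m x).
Proof.
rewrite /Gm mulmxBl dotDr dotNr -!mulmxA dot_tr /Vf [dot x _]dotC.
by rewrite [dot (Acl *m x) _]dotC.
Qed.

Lemma Acl_step (x : 'cV[R]_N) :
  Acl *m x = Ass *m x + B1s *m 0 + B2s *m ((S *m invmx RR) *m x).
Proof. by rewrite mulmx0 addr0 /Acl mulmxDl -mulmxA. Qed.

Lemma Gm_pd : posdef Gm.
Proof.
have XT : (invmx RR)^T = invmx RR by rewrite trmx_inv RRpd.1.
split.
  by rewrite /Gm linearB /= !trmx_mul XT trmxK mulmxA.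
move=> x nz; rewrite qfE Gm_dot.
have := negdef_lt0 Hlmi (vecv_neq0 0 nz); rewrite step_eq -Acl_step.
have := dot_ge0 (C1s *m x + D11 *m 0 + D12 *m ((S *m invmx RR) *m x)).
rewrite dot0l mulr0.
have : 0 < b^-1 by rewrite invr_gt0.
set E := dot _ _ => h1 h2; nra.
Qed.


Lemma CS (G : 'M[R]_N) : G^T = G -> (forall x, 0 <= dot x (G *m x)) ->
  forall x y t, 2 * t * dot x (G *m y) <= dot x (G *m x) + t ^+ 2 * dot y (G *m y).
Proof.
move=> GT Gp x y t; have := Gp (x - t *: y).
rewrite mulmxBr -scalemxAr dotDl !dotDr !dotNl !dotNr !dotZl !dotZr.
have -> : dot y (G *m x) = dot x (G *m y) by rewrite -{1}GT dot_tr dotC.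
move=> h; nra.
Qed.

Lemma stable : schur_stable Acl.
Proof.
move=> z0 i.
pose x := fun k => Acl ^+ k *m z0.
have xS k : x k.+1 = Acl *m x k by rewrite /x exprS -mulmxE -mulmxA.
pose Vs := fun k => Vf (x k).
have Vdec : {homo Vs : n m / (n <= m)%N >-> m <= n}.
  apply/nonincreasing_seqP => k; rewrite /Vs xS.
  have := posdef_ge0 (x k) Gm_pd; rewrite Gm_dot; lra.
have lb : has_lbound (range Vs) by exists 0 => _ [k _ <-]; exact: Vf_ge0.
have hc := nonincreasing_is_cvgn Vdec lb.
have hc' : ((fun k => Vs k.+1) @ \oo --> limn Vs)%classic by rewrite (cvg_shiftS Vs).
have gk : ((fun k => dot (x k) (Gm *m x k)) @ \oo --> (0:R))%classic.
  have -> : (fun k => dot (x k) (Gm *m x k)) = (fun k => Vs k - Vs k.+1).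
    by apply/funext => k; rewrite Gm_dot /Vs xS.
  have := cvgB hc hc'; rewrite subrr; exact.
pose ei : 'cV[R]_N := delta_mx i 0.
pose y := invmx Gm *m ei.
have Gy : Gm *m y = ei by rewrite /y mulmxA mulmxV ?mul1mx //; exact: posdef_unit Gm_pd.
have dxi k : dot (x k) (Gm *m y) = x k i 0 by rewrite Gy /dot -colE !mxE.
apply/cvgrPdist_lt => eps eps0.
pose c := dot y (Gm *m y).
have c0 : 0 <= c by exact: posdef_ge0 y Gm_pd.
pose t := eps / (c + 1).
have t0 : 0 < t by rewrite /t divr_gt0 // ltr_wpDl.
have tc : t * c + t = eps.
  by rewrite /t; field; rewrite gt_eqF // ltr_wpDl.
have GT : Gm^T = Gm by case: Gm_pd.
have Gp : forall v, 0 <= dot v (Gm *m v) by move=> v; exact: posdef_ge0 v Gm_pd.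
have /cvgrPdist_lt /(_ (eps * t) (mulr_gt0 eps0 t0)) := gk.
apply: filterS => k; rewrite !sub0r !normrN => hk.
have g0 := Gp (x k).
move: hk; rewrite ger0_norm // => hk.
have cs1 := CS GT Gp (x k) y t.
have cs2 := CS GT Gp (x k) y (- t).
rewrite dxi in cs1 cs2; rewrite -/c in cs1 cs2.
change (`|x k i 0| < eps).
rewrite ltr_norml; apply/andP; split; nra.
Qed.

End Sys.





Section Init.
Variable R : realType.

Lemma init_bound m (F1 G RR : 'M[R]_m) (w : 'cV[R]_m) : RR \in unitmx ->
  posdef (block_mx F1 G^T G RR) -> Vf RR (G *m w) <= dot w (F1 *m w).
Proof.
move=> RRu pd.
have := posdef_ge0 (col_mx w (- (invmx RR *m (G *m w)))) pd.
have RX : RR *m (invmx RR *m (G *m w)) = G *m w by rewrite mulmxA mulmxV // mul1mx.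
rewrite dot_block !mulmxN RX !dotNl !dotNr dot_tr [dot (G *m w) _]dotC opprK.
rewrite /Vf; lra.
Qed.

Lemma ell_w n (P Gp : 'M[R]_n) (p : 'cV[R]_n) : posdef P -> is_inv_sqrt P Gp ->
  ellipsoid P p ->
  Gp *m (Gp *m (P *m p)) = p /\ dot (Gp *m (P *m p)) (Gp *m (P *m p)) <= 1.
Proof.
move=> Ppd [[GT _] GG] ell.
have e1 : Gp *m (Gp *m (P *m p)) = p.
  by rewrite mulmxA GG mulmxA mulVmx ?mul1mx //; exact: posdef_unit.
split => //.
rewrite -dot_tr GT e1 dotC -qfE; exact: ell.
Qed.

Lemma init_w n Nb (P : 'M[R]_n) (Q : 'M[R]_Nb) Gp Gq f11 f12 z0 :
  posdef P -> posdef Q -> is_inv_sqrt P Gp -> is_inv_sqrt Q Gq ->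
  0 < f11 -> 0 < f12 -> init_set P Q z0 ->
  exists w, block_mx Gp 0 0 Gq *m w = z0 /\
    dot w (block_mx (f11%:M : 'M[R]_n) 0 0 (f12%:M : 'M[R]_Nb) *m w) <= f11 + f12.
Proof.
move=> Pp Qp HP HQ f11p f12p [p [q [ep [eq ->]]]].
have [h1 h2] := ell_w Pp HP ep.
have [h3 h4] := ell_w Qp HQ eq.
exists (col_mx (Gp *m (P *m p)) (Gq *m (Q *m q))).
rewrite !mul_block_col !mul0mx !addr0 !add0r h1 h3; split => //.
rewrite dot_col !mul_scalar_mx !dotZr; nra.
Qed.

End Init.



Section L2.
Variable R : realType.

Lemma l2_partial m (x : nat -> 'cV[R]_m) K :
  ((\sum_(0 <= k < K) sqnorm (x k))%:E <= l2sq x)%E.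
Proof.
rewrite -sumEFin; apply: nneseries_lim_ge => k _ _.
by rewrite lee_fin sqnorm_dot dot_ge0.
Qed.

Lemma l2norm_le1 m (x : nat -> 'cV[R]_m) : (l2norm x <= 1%:E)%E ->
  forall K, \sum_(0 <= k < K) sqnorm (x k) <= 1.
Proof.
move=> h K; have := l2_partial x K; move: h; rewrite /l2norm.
case: (l2sq x) => [r| |] //= h1 h2.
have h1' : Num.sqrt r <= 1 by rewrite -lee_fin; exact: h1.
have h2' : \sum_(0 <= k < K) sqnorm (x k) <= r by rewrite -lee_fin.
apply: (le_trans h2').
rewrite leNgt; apply/negP => hr.
have := ltr_sqrt 1 (lt_trans ltr01 hr); rewrite hr sqrtr1 => h3.
by move: h1'; rewrite leNgt h3.
Qed.

Lemma l2sq_le m (x : nat -> 'cV[R]_m) c : 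
  (forall K, \sum_(0 <= k < K) sqnorm (x k) <= c) ->
  (l2norm x <= (Num.sqrt c)%:E)%E.
Proof.
move=> h.
have hle : (l2sq x <= c%:E)%E.
  rewrite /l2sq; apply: lime_le.
    by apply: is_cvg_nneseries => k _ _; rewrite lee_fin sqnorm_dot dot_ge0.
  by apply: nearW => K; rewrite sumEFin lee_fin.
have hge : (0 <= l2sq x)%E.
  by rewrite /l2sq; apply: nneseries_ge0 => k _ _; rewrite lee_fin sqnorm_dot dot_ge0.
move: hle hge; rewrite /l2norm; case: (l2sq x) => [r| |] //= h1 h2.
by rewrite lee_fin; apply: ler_wsqrtr; rewrite -lee_fin.
Qed.

End L2.



Lemma traj_bound (R : realType) (N nu nd ne : nat) (Ass : 'M[R]_N) (B1s : 'M[R]_(N, nd))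
  (B2s : 'M[R]_(N, nu)) (C1s : 'M[R]_(ne, N)) (D11 : 'M[R]_(ne, nd))
  (D12 : 'M[R]_(ne, nu)) (RR : 'M[R]_N) (S : 'M[R]_(nu, N)) (b f2 : R) :
  RR \in unitmx -> 0 < b -> negdef (LMI Ass B1s B2s C1s D11 D12 RR S b f2) ->
  forall d z0 K,
  \sum_(0 <= k < K) sqnorm (cl_output Ass B1s B2s C1s D11 D12 (S *m invmx RR) d z0 k)
  <= b * (Vf RR z0 - Vf RR (cl_state Ass B1s B2s (S *m invmx RR) d z0 K)
          + f2 * \sum_(0 <= k < K) sqnorm (d k)).
Proof.
move=> RRu b0 Hlmi d z0; elim => [|K IH].
  by rewrite !big_geq // subrr mulr0 addr0 mulr0.
rewrite !big_nat_recr //=.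
have := step_le RRu b0 Hlmi (cl_state Ass B1s B2s (S *m invmx RR) d z0 K) (d K).
rewrite -!sqnorm_dot /cl_output.
have bb : b * b^-1 = 1 by rewrite mulfV // gt_eqF.
move: IH.
set E := sqnorm _; set V1 := Vf RR _; set V0 := Vf RR (cl_state _ _ _ _ _ _ K).
set SE := \sum_(0 <= k < K) _; set SD := \sum_(0 <= k < K) _.
move=> IH h.
have hb := ler_wpM2l (ltW b0) h; rewrite mulr0 in hb.
set bi := b^-1 in hb bb.
have hE : E = b * (bi * E) by rewrite mulrA bb mul1r.
move: hb hE IH; set W := Vf RR _; set dK := sqnorm (d K) => hb hE IH.
nra.
Qed.

Theorem corollary1 (R : realType) (n Nb nu nd ne : nat)
  (P : 'M[R]_n) (Q : 'M[R]_Nb) (Gp : 'M[R]_n) (Gq : 'M[R]_Nb)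
  (Ass : 'M[R]_(n + Nb)) (B1s : 'M[R]_(n + Nb, nd)) (B2s : 'M[R]_(n + Nb, nu))
  (C1s : 'M[R]_(ne, n + Nb)) (D11 : 'M[R]_(ne, nd)) (D12 : 'M[R]_(ne, nu))
  (gamma : R)
  (RR : 'M[R]_(n + Nb)) (S : 'M[R]_(nu, n + Nb)) (b f11 f12 f2 : R) :
  posdef P -> posdef Q ->
  is_inv_sqrt P Gp -> is_inv_sqrt Q Gq ->
  posdef RR -> 0 < b -> 0 < f11 -> 0 < f12 -> 0 < f2 ->
  negdef (block_mx
            (block_mx (- RR) (Ass *m RR + B2s *m S)
                      ((Ass *m RR + B2s *m S)^T) (- RR))
            (block_mx B1s (0 : 'M[R]_(n + Nb, ne))
                      (0 : 'M[R]_(n + Nb, nd)) ((C1s *m RR + D12 *m S)^T))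
            (block_mx B1s (0 : 'M[R]_(n + Nb, ne))
                      (0 : 'M[R]_(n + Nb, nd)) ((C1s *m RR + D12 *m S)^T))^T
            (block_mx (- (f2%:M : 'M[R]_(nd))) (D11^T) D11 (- (b%:M : 'M[R]_(ne))))) ->
  b + f11 + f12 + f2 < 2 * gamma ->
  posdef (block_mx
            (block_mx (f11%:M : 'M[R]_(n)) 0 0 (f12%:M : 'M[R]_(Nb)))
            (block_mx Gp 0 0 Gq)^T
            (block_mx Gp 0 0 Gq)
            RR) ->
  let Dc := S *m invmx RR in
  schur_stable (Ass + B2s *m Dc) /\
  (worst_case P Q Ass B1s B2s C1s D11 D12 Dc < gamma%:E)%E.
Proof.
move=> Pp Qp HP HQ RRp b0 f110 f120 f20 Hlmi Hsum Hinit Dc.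
have RRu := posdef_unit RRp.
have Hlmi' : negdef (LMI Ass B1s B2s C1s D11 D12 RR S b f2) by exact: Hlmi.
split; first exact: (stable RRu b0 RRp Hlmi').
pose c := b * (f11 + f12 + f2).
apply: (@le_lt_trans _ _ (Num.sqrt c)%:E).
  apply/ereal_supP => _ [d [z0 [hd [hz ->]]]].
  apply: l2sq_le => K.
  have [w [hw1 hw2]] := init_w Pp Qp HP HQ f110 f120 hz.
  have hV : Vf RR z0 <= f11 + f12.
    by rewrite -hw1; apply: le_trans (init_bound w RRu Hinit) hw2.
  have := traj_bound RRu b0 Hlmi' d z0 K.
  have := Vf_ge0 RRu (cl_state Ass B1s B2s Dc d z0 K) RRp.
  have := l2norm_le1 hd K.
  rewrite -/Dc.
  set SE := \sum_(0 <= k < K) _; set SD := \sum_(0 <= k < K) _.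
  set VK := Vf RR _ => h1 h2 h3.
  have hf := ler_wpM2l (ltW f20) h1; rewrite mulr1 in hf.
  apply: (le_trans h3); rewrite /c ler_pM2l //; lra.
rewrite lte_fin.
have g0 : 0 < gamma by nra.
rewrite -(ger0_norm (ltW g0)) -sqrtr_sqr ltr_sqrt ?exprn_gt0 //.
have h1 : 0 < (2 * gamma - (b + (f11 + f12 + f2))) * (2 * gamma + (b + (f11 + f12 + f2))).
  by apply: mulr_gt0; lra.
have h2 := sqr_ge0 (b - (f11 + f12 + f2)).
rewrite /c; nra.
Qed.
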